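(* Let $\mathcal{A}_1=(Q,R_1,V_1,V_1',f_1)$ and $\mathcal{A}_2=(Q,R_2,V_2,V_2',f_2)$ be two stochastic CA with the same set of states, with explicit global functions $F_1,F_2$. If they are not deterministic and $S_{F_1}=S_{F_2}$, then $|R_1|$ and $|R_2|$ have a common prime factor, i.e. $\mathscr{PF}(\mathcal{A}_1)\cap\mathscr{PF}(\mathcal{A}_2)\neq\emptyset$.
   Context: A stochastic CA is $(Q,R,V,V',f)$ with $Q$ finite states, $R$ finite random symbols, $V=\{v_1,\dots,v_r\}$, $V'=\{v'_1,\dots,v'_{r'}\}$ finite subsets of $\mathbb{Z}$, $f:Q^r\times R^{r'}\to Q$; explicit global function $F(c,s)_z=f((c_{z+v_1},\dots,c_{z+v_r}),(s_{z+v'_1},\dots,s_{z+v'_{r'}}))$. It is deterministic if $f$ does not depend on its second argument. $\nu_R$ is the uniform Bernoulli measure on $R^{\mathbb{Z}}$; the stochastic global function $S_F:Q^{\mathbb{Z}}\to\mathcal{M}(Q^{\mathbb{Z}})$ is $S_F(c)([u]_z)=\nu_R(\{s: F(c,s)\in[u]_z\})$ for cylinders $[u]_z=\{c:c_{z+x}=u_x,0\le x<|u|\}$. $\mathscr{PF}(\mathcal{A})$ denotes the set of prime factors of $|R|$. *)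

(* Defs.v *)
From mathcomp Require Import all_boot all_order all_algebra.
Set Implicit Arguments. Unset Strict Implicit. Unset Printing Implicit Defensive.
Import GRing.Theory Num.Theory.
Local Open Scope ring_scope.

(* A stochastic CA (Q, R, V, V', f): V = [:: v_1; ...; v_r] and
   V' = [:: v'_1; ...; v'_r'] are duplicate-free lists of integers (enumerations
   of the finite neighbourhoods), f : Q^r x R^r' -> Q. *)
Section SCA.
Variables (Q R : finType) (V V' : seq int).
Variable f : (size V).-tuple Q -> (size V').-tuple R -> Q.

Definition deterministic : Prop := forall a s1 s2, f a s1 = f a s2.

Definition globalF (c : int -> Q) (s : int -> R) (z : int) : Q :=
  f [tuple c (z + tnth (in_tuple V) i) | i < size V]
    [tuple s (z + tnth (in_tuple V') i) | i < size V'].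

Definition in_cyl (u : seq Q) (z : int) (d : int -> Q) : bool :=
  all (fun p => d (z + (p.1)%:Z) == p.2) (zip (iota 0 (size u)) u).

(* the finite window of random-symbol cells on which the event
   {s | F(c,s) \in [u]_z} depends *)
Definition window (u : seq Q) (z : int) : seq int :=
  undup [seq z + (x%:Z) + v | x <- iota 0 (size u), v <- V'].

(* extension of an assignment w of the window W to a full configuration
   (cells outside W get an arbitrary fixed symbol r0; irrelevant) *)
Definition ext (r0 : R) (W : seq int) (w : seq R) : int -> R :=
  fun k => nth r0 w (index k W).

(* S_F(c)([u]_z) = nu_R({s | F(c,s) \in [u]_z}), nu_R the uniform Bernoulli
   measure on R^Z; since the event only depends on the coordinates in the
   finite window W, its measure is (#good assignments of W) / |R|^|W|. *)
Definition SF (c : int -> Q) (z : int) (u : seq Q) : rat :=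
  let W := window u z in
  match [pick r : R] with
  | Some r0 =>
      (#|[set w : (size W).-tuple R | in_cyl u z (globalF c (ext r0 W w))]|%:R)
        / ((#|R| ^ size W)%N%:R)
  | None => 0
  end.

End SCA.

Definition PF (R : finType) : seq nat := primes #|R|.

(* Main.v *)
Require Import Defs.
From mathcomp Require Import all_boot all_order all_algebra.
From Stdlib Require Import Classical.
Set Implicit Arguments. Unset Strict Implicit. Unset Printing Implicit Defensive.
Import GRing.Theory Num.Theory.

Lemma tuple_ext_id (R : finType) (V' : seq int) (r0 : R) (w : (size V').-tuple R) :
  uniq V' ->
  [tuple ext r0 V' w (0 + tnth (in_tuple V') i)%R | i < size V'] = w.
Proof.
move=> U; apply: eq_from_tnth => i.
by rewrite tnth_mktuple add0r /ext (tnth_nth 0%R) /= index_uniq // (tnth_nth r0).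
Qed.

Lemma key (Q R : finType) (V V' : seq int)
  (f : (size V).-tuple Q -> (size V').-tuple R -> Q) :
  uniq V -> uniq V' -> ~ deterministic f ->
  exists c z u k n, (0 < k < #|R| ^ n)%N /\
    SF f c z u = (k%:R / (#|R| ^ n)%N%:R)%R.
Proof.
move=> UV UV' ND.
have [a [s1 [s2 Hne]]] : exists a s1 s2, f a s1 <> f a s2.
  apply: NNPP => H; apply: ND => a s1 s2.
  by apply: NNPP => H'; apply: H; exists a, s1, s2.
set q := f a s1.
pose c := fun k : int => nth q a (index k V).
have Ec : [tuple c (0 + tnth (in_tuple V) i)%R | i < size V] = a.
  apply: eq_from_tnth => i.
  by rewrite tnth_mktuple add0r /c (tnth_nth 0%R) /= index_uniq // (tnth_nth q).
have EW : window V' [:: q] 0%R = V'.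
  rewrite /window /= cats0.
  have -> : [seq (0 + 0%Z + v)%R | v <- V'] = V'.
    by rewrite -[RHS]map_id; apply: eq_map => v; rewrite !add0r.
  by rewrite undup_id.
exists c, 0%R, [:: q].
rewrite /SF.
set W := window _ _ _.
have EW' : W = V' by exact: EW.
clearbody W. subst W.
have ES : forall r0 : R, [set w : (size V').-tuple R | in_cyl [:: q] 0%R (globalF f c (ext r0 V' w))]
   = [set w : (size V').-tuple R | f a w == q].
  move=> r0; apply: eq_finset => w.
  rewrite /in_cyl /= andbT /globalF.
  have z0 : (0 + 0%:Z = 0 :> int)%R by [].
  by rewrite z0 Ec tuple_ext_id.
rewrite /q; case: pickP => [r0 _|H]; last first.
  exfalso; apply: Hne; congr f; apply: eq_from_tnth => i.
  by have := H (tnth s1 i).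
rewrite ES.
exists #|[set w : (size V').-tuple R | f a w == q]|, (size V'); split => //.
apply/andP; split.
  by apply/card_gt0P; exists s1; rewrite inE.
rewrite -card_tuple -cardsT; apply: proper_card; rewrite properT.
apply/negP => /eqP E; have : s2 \in [set: (size V').-tuple R] by rewrite inE.
by rewrite -E inE => /eqP H2; apply: Hne.
Qed.

Lemma form (Q R : finType) (V V' : seq int)
  (f : (size V).-tuple Q -> (size V').-tuple R -> Q) c z u :
  exists k n, SF f c z u = (k%:R / (#|R| ^ n)%N%:R)%R.
Proof.
rewrite /SF; case: pickP => [r0 _|_]; first by do 2 eexists.
by exists 0%N, 0%N; rewrite GRing.mul0r.
Qed.

Lemma card_gt1 (Q R : finType) (V V' : seq int)
  (f : (size V).-tuple Q -> (size V').-tuple R -> Q) :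
  ~ deterministic f -> (1 < #|R|)%N.
Proof.
move=> ND; rewrite ltnNge; apply/negP => /fintype_le1P H.
have [x _] : exists x : R, True.
  apply: NNPP => N; apply: ND => a s1 s2; congr f; apply: eq_from_tnth => i.
  by exfalso; apply: N; exists (tnth s1 i).
by apply: ND => a s1 s2; congr f; apply: eq_from_tnth => i; rewrite !(H x).
Qed.

Theorem lemma2 (Q R1 R2 : finType) (V1 V1' V2 V2' : seq int)
  (f1 : (size V1).-tuple Q -> (size V1').-tuple R1 -> Q)
  (f2 : (size V2).-tuple Q -> (size V2').-tuple R2 -> Q) :
  uniq V1 -> uniq V1' -> uniq V2 -> uniq V2' ->
  ~ deterministic f1 -> ~ deterministic f2 ->
  SF f1 = SF f2 ->
  exists p : nat, p \in PF R1 /\ p \in PF R2.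
Proof.
move=> U1 U1' U2 U2' N1 N2 E.
have g1 := card_gt1 N1; have g2 := card_gt1 N2.
have [c [z [u [k1 [n1 [/andP [k1p k1l] E1]]]]]] := key U1 U1' N1.
have [k2 [n2 E2]] := form f2 c z u.
have := E1; rewrite E E2 => /eqP.
rewrite eqr_div; first last.
- by rewrite pnatr_eq0 -lt0n expn_gt0 (ltn_trans _ g1).
- by rewrite pnatr_eq0 -lt0n expn_gt0 (ltn_trans _ g2).
rewrite -!natrM eqr_nat => /eqP Ek.
have [cop|ncop] := boolP (coprime #|R1| #|R2|).
  have cA : coprime (#|R1| ^ n1) (#|R2| ^ n2) by rewrite coprimeXl // coprimeXr.
  have : (#|R1| ^ n1 %| k1 * #|R2| ^ n2)%N by rewrite -Ek dvdn_mull.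
  rewrite Gauss_dvdl // => /(dvdn_leq k1p).
  by rewrite leqNgt k1l.
have gt1 : (1 < gcdn #|R1| #|R2|)%N.
  rewrite ltn_neqAle eq_sym ncop /= gcdn_gt0.
  by rewrite (ltn_trans _ g1).
exists (pdiv (gcdn #|R1| #|R2|)); rewrite /PF !mem_primes pdiv_prime //.
rewrite (ltn_trans _ g1) // (ltn_trans _ g2) //.
by rewrite !(dvdn_trans (pdiv_dvd _)) // ?dvdn_gcdl ?dvdn_gcdr.
Qed.
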